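(* Let $m\ge 3$, $H=B(l_1,\ldots,l_m)$ with $l_1\le l_2\le 2$, and $G=H^2$. Then $G$ is equitably $(m+1)$-choosable.
   Context: All graphs are finite and simple. For $m,l_1,\ldots,l_m\in\mathbb{N}$ with $l_1\le\cdots\le l_m$, $B(l_1,\ldots,l_m)$ is the graph with vertex set $\{u\}\cup\{v_{i,j}: i\in[m], j\in[l_i]\}$ in which, for each $i\in[m]$, consecutive vertices in the sequence $u, v_{i,1},\ldots,v_{i,l_i}$ are adjacent (and there are no other edges). For a graph $H$, $H^2$ has vertex set $V(H)$ with two vertices adjacent iff their distance in $H$ is 1 or 2. A $k$-assignment $L$ assigns to each vertex a set of exactly $k$ colors; an equitable $L$-coloring of $G$ is a proper coloring $f$ with $f(v)\in L(v)$ such that no color is used more than $\lceil |V(G)|/k\rceil$ times; $G$ is equitably $k$-choosable if it has an equitable $L$-coloring for every $k$-assignment $L$. *)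

(* Defs.v *)
From mathcomp Require Import all_boot.
Set Implicit Arguments. Unset Strict Implicit. Unset Printing Implicit Defensive.

(* Vertex type of the spider B(l_1,...,l_m), with m = size l and l_i = nth 0 l (i-1).
   None is the center u; Some (i; j) is v_{i+1, j+1} (0-based indices). *)
Definition spider_vertex (l : seq nat) : finType :=
  option {i : 'I_(size l) & 'I_(nth 0 l i)}.

Definition spider_adj (l : seq nat) (x y : spider_vertex l) : bool :=
  match x, y with
  | None, None => false
  | None, Some q => val (tagged q) == 0
  | Some p, None => val (tagged p) == 0
  | Some p, Some q =>
      (tag p == tag q) &&
      (((val (tagged p)).+1 == val (tagged q)) || ((val (tagged q)).+1 == val (tagged p)))
  end.

Definition square_adj (V : finType) (e : rel V) : rel V :=
  fun x y => (x != y) && (e x y || [exists z, e x z && e z y]).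

Definition ceil_div (n k : nat) : nat := (n + k.-1) %/ k.

Definition equitable_L_coloring (V : finType) (e : rel V) (k : nat)
    (C : eqType) (L : V -> seq C) (f : V -> C) : Prop :=
  (forall v, f v \in L v) /\
  (forall x y, e x y -> f x != f y) /\
  (forall c : C, #|[pred v | f v == c]| <= ceil_div #|V| k).

Definition equitably_choosable (V : finType) (e : rel V) (k : nat) : Prop :=
  forall (C : eqType) (L : V -> seq C),
    (forall v, uniq (L v) /\ size (L v) = k) ->
    exists f : V -> C, equitable_L_coloring e k L f.

(* Main.v *)
Require Import Defs.
From mathcomp Require Import all_boot.
From mathcomp Require Import zify.
Set Implicit Arguments. Unset Strict Implicit. Unset Printing Implicit Defensive.


Lemma greedy (V : finType) (e : rel V) (k : nat) (r b : V -> nat) (v0 : V) :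
  injective r -> (forall x, e x x = false) ->
  (forall v, b v < ceil_div #|V| k) ->
  (forall v, #|[pred w | (r w < r v) && [|| e v w, e w v | b w == b v]]| < k) ->
  equitably_choosable e k.
Proof.
move=> rI eI bB Fk C L HL.
have [x0 _] : exists x0 : C, True.
  have := HL v0; case: (L v0) => [|x s] [_ /= Hs]; last by exists x.
  by have := Fk v0; rewrite -Hs ltn0.
pose F v := [pred w | (r w < r v) && [|| e v w, e w v | b w == b v]].
pose Inv t (f : V -> C) := forall v, r v < t -> f v \in L v /\
   forall w, r w < r v -> [|| e v w, e w v | b w == b v] -> f w != f v.
have step : forall t, exists f, Inv t f.
  elim=> [|t [f Hf]]; first by exists (fun=> x0).
  case: (pickP [pred v | r v == t]) => [v /eqP rv | none].
  - have : has (fun c => c \notin [seq f w | w <- enum (F v)]) (L v).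
      apply/negPn/negP => /hasPn H.
      have sub : {subset L v <= [seq f w | w <- enum (F v)]}.
        by move=> c /H; rewrite negbK.
      have := uniq_leq_size (HL v).1 sub; rewrite size_map -cardE (HL v).2.
      by move=> le; have := Fk v; rewrite ltnNge le.
    case/hasP => c cL cN.
    exists (fun x => if x == v then c else f x) => x rx.
    case: (eqVneq x v) => [->|xv].
      split => // w rw Hw.
      have wv : w != v by apply/eqP => wv; move: rw; rewrite wv ltnn.
      rewrite (negbTE wv); apply: contra cN => /eqP <-.
      by apply: map_f; rewrite mem_enum inE rw Hw.
    have rxt : r x < t.
      rewrite ltn_neqAle -ltnS rx andbT -rv; apply/eqP => /rI E.
      by rewrite E eqxx in xv.
    have [H1 H2] := Hf x rxt; split => // w rw Hw.
    have wv : w != v by apply/eqP => wv; move: (ltn_trans rw rxt); rewrite wv rv ltnn.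
    by rewrite (negbTE wv); apply: H2.
  - exists f => x rx; apply: Hf.
    by rewrite ltn_neqAle -ltnS rx andbT; have := none x => /= ->.
have [f Hf] := step (\max_(v : V) (r v).+1).
have P v := Hf v (leq_bigmax v).
exists f; split; first by move=> v; case: (P v).
split.
  move=> x y exy; case: (ltngtP (r x) (r y)) => H.
  - by apply: (P y).2 => //; rewrite exy orbT.
  - by rewrite eq_sym; apply: (P x).2 => //; rewrite exy.
  - by move: exy; rewrite (rI _ _ H) eI.
move=> c.
pose g (v : V) : 'I_(ceil_div #|V| k) := Ordinal (bB v).
have ginj : {in [pred v | f v == c] &, injective g}.
  move=> x y; rewrite !inE => /eqP fx /eqP fy /(congr1 val) /= bxy.
  case: (ltngtP (r x) (r y)) => H.
  - by have := (P y).2 x H; rewrite bxy eqxx !orbT fx fy eqxx => /(_ isT).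
  - by have := (P x).2 y H; rewrite bxy eqxx !orbT fx fy eqxx => /(_ isT).
  - exact: rI.
rewrite -(card_in_imset ginj).
by apply: leq_trans (max_card _) _; rewrite card_ord.
Qed.


Definition ci (l : seq nat) (p : {i : 'I_(size l) & 'I_(nth 0 l i)}) : nat := nat_of_ord (tag p).
Definition cj (l : seq nat) (p : {i : 'I_(size l) & 'I_(nth 0 l i)}) : nat := nat_of_ord (tagged p).

Lemma coord_inj l (p q : {i : 'I_(size l) & 'I_(nth 0 l i)}) :
  ci p = ci q -> cj p = cj q -> p = q.
Proof.
case: p => i j; case: q => i' j'; rewrite /ci /cj /= => /val_inj E; subst i'.
by move=> /val_inj ->.
Qed.

Lemma ci_lt l p : @ci l p < size l. Proof. exact: ltn_ord. Qed.
Lemma cj_lt l p : @cj l p < nth 0 l (ci p). Proof. exact: ltn_ord. Qed.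

Ltac nlia := rewrite ?/ci ?/cj /=; try apply/eqP; lia.

Definition sqadj l (x y : spider_vertex l) : bool :=
  match x, y with
  | None, None => false
  | None, Some q => cj q <= 1
  | Some p, None => cj p <= 1
  | Some p, Some q =>
     ((ci p == ci q) && (cj p != cj q) && (cj p <= cj q + 2) && (cj q <= cj p + 2))
     || ((ci p != ci q) && (cj p == 0) && (cj q == 0))
  end.

Lemma sqadj_sym1 l (x y : spider_vertex l) : sqadj x y -> sqadj y x.
Proof.
case: x => [p|]; case: y => [q|] //=.
case/orP => [/andP [/andP [/andP [/eqP a b] c] d] | /andP [/andP [a /eqP b] /eqP c]];
  apply/orP; [left|right].
- by rewrite a eqxx eq_sym b c d.
- by rewrite eq_sym a b c.
Qed.

Lemma sqadj_sym l (x y : spider_vertex l) : sqadj x y = sqadj y x.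
Proof. by apply/idP/idP; apply: sqadj_sym1. Qed.

Lemma sq_sqadj l (x y : spider_vertex l) : square_adj (@spider_adj l) x y -> sqadj x y.
Proof.
case/andP => xy /orP [].
  case: x y xy => [p|] [q|] //= _.
  - case/andP => /eqP/(congr1 val) E /orP [] /eqP H; apply/orP; left;
    rewrite -!andbA; apply/and4P; split; try (apply/eqP; exact E); nlia.
  - move/eqP; nlia.
  - move/eqP; nlia.
case/existsP => z /andP [].
case: x y z xy => [p|] [q|] [s|] //=.
- move=> pq /andP [/eqP e1 H1] /andP [/eqP e2 H2].
  have e12 : ci p = ci q by rewrite /ci e1 e2.
  apply/orP; left; rewrite e12 eqxx /=.
  have : cj p != cj q.
    apply: contra pq => /eqP E; apply/eqP; congr Some; exact: coord_inj.
  move: H1 H2; rewrite /cj => /orP [] /eqP H1 /orP [] /eqP H2 /=; lia.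
- move=> pq /eqP H1 /eqP H2; rewrite /cj H1 H2 eqxx andbT.
  apply/orP; right; rewrite andbT; apply: contra pq => /eqP E; apply/eqP; congr Some.
  by apply: coord_inj; rewrite // /cj H1 H2.
- move=> _ /andP [/eqP e1 /orP [] /eqP H1] /eqP H2; rewrite /cj; lia.
- move=> _ /eqP H1 /andP [/eqP e1 /orP [] /eqP H2]; rewrite /cj; lia.
Qed.


Definition Sg (l : seq nat) (i : nat) := \sum_(1 <= t < i) (nth 0 l t - 1).
Definition Ag (l : seq nat) := Sg l (size l).-1 + nth 0 l (size l).-1.
Definition rkn (l : seq nat) (i j : nat) : nat :=
  if i == 0 then Ag l + (size l).-1 + j
  else if (j == 0) && (i < (size l).-1) then Ag l + ((size l).-1 - i)
  else Sg l i + (nth 0 l i - 1 - j).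
Definition rk (l : seq nat) (v : spider_vertex l) : nat :=
  match v with None => Ag l | Some p => rkn l (ci p) (cj p) end.
Definition Ng (l : seq nat) := Ag l + size l - 2 + nth 0 l 0.
Definition bk (l : seq nat) (v : spider_vertex l) := (Ng l - rk v) %/ (size l).+1.

Lemma SgS l i : 0 < i -> Sg l i.+1 = Sg l i + (nth 0 l i - 1).
Proof. by move=> i0; rewrite /Sg big_nat_recr. Qed.

Lemma Sg_succ l i : Sg l i <= Sg l i.+1.
Proof. case: i => [|i]; first by rewrite /Sg big_geq. rewrite [X in _ <= X]SgS //; lia. Qed.

Lemma Sg_mono l i i' : i <= i' -> Sg l i <= Sg l i'.
Proof.
elim: i' => [|i' IH]; first by rewrite leqn0 => /eqP ->.
rewrite leq_eqVlt => /orP [/eqP -> //|]; rewrite ltnS => /IH H.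
exact: leq_trans H (Sg_succ _ _).
Qed.

Lemma card_sp l : 3 <= size l -> (forall i, i < size l -> 0 < nth 0 l i) ->
  #|spider_vertex l| = (Ng l).+1.
Proof.
move=> m3 pos.
rewrite /spider_vertex card_option card_tagged.
have -> : sumn [seq #|'I_(nth 0 l i)| | i : 'I_(size l) <- enum 'I_(size l)] =
          \sum_(0 <= i < size l) nth 0 l i.
  rewrite sumnE big_map big_enum /= [RHS]big_mkord; apply: eq_bigr => i _.
  by rewrite card_ord.
have mE : size l = (size l).-1.+1 by lia.
rewrite mE big_nat_recr //= big_ltn; last by lia.
have -> : \sum_(1 <= i < (size l).-1) nth 0 l i = Sg l (size l).-1 + ((size l).-1 - 1).
  rewrite /Sg -[(size l).-1 - 1]muln1 -(sum_nat_const_nat 1 (size l).-1 1) -big_split /=.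
  apply: eq_big_nat => i /andP [i1 im]; have := pos i; lia.
rewrite /Ng /Ag; have := pos 0; have := pos (size l).-1; lia.
Qed.

Lemma rkP l (p : {i : 'I_(size l) & 'I_(nth 0 l i)}) : 3 <= size l -> (forall i, i < size l -> 0 < nth 0 l i) ->
  [\/ ci p = 0 /\ rkn l (ci p) (cj p) = Ag l + (size l).-1 + cj p /\ cj p < nth 0 l 0,
      [/\ 0 < ci p, cj p = 0, ci p < (size l).-1 & rkn l (ci p) (cj p) = Ag l + ((size l).-1 - ci p)] |
      [/\ 0 < ci p, 0 < cj p \/ ci p = (size l).-1,
          rkn l (ci p) (cj p) = Sg l (ci p) + (nth 0 l (ci p) - 1 - cj p) & rkn l (ci p) (cj p) < Ag l]].
Proof.
move=> m3 pos; have iL := ci_lt p; have jL := cj_lt p.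
rewrite /rkn; case: eqP => [i0|i0].
  by constructor 1; rewrite i0 in jL.
case: ifP => [/andP [/eqP j0 im]|H]; first by constructor 2; split => //; lia.
constructor 3; split => //; first by lia.
  by move/negbT: H; rewrite negb_and => /orP []; [left; lia | right; lia].
rewrite /Ag; have := pos (size l).-1; have := pos (ci p).
case: (ltnP (ci p) (size l).-1) => H2.
  have i0' : 0 < ci p by lia.
  have := SgS l i0'; have := @Sg_mono l (ci p).+1 (size l).-1 H2.
  move: H; rewrite H2 andbT => /negbT /eqP ?; lia.
have -> : ci p = (size l).-1 by lia.
have : cj p < nth 0 l (size l).-1 by have -> : (size l).-1 = ci p by lia.
lia.
Qed.

Lemma tail_order l (p q : {i : 'I_(size l) & 'I_(nth 0 l i)}) : 0 < ci p -> ci p < ci q -> 0 < cj p ->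
  Sg l (ci p) + (nth 0 l (ci p) - 1 - cj p) < Sg l (ci q).
Proof.
move=> i0 iq j0; have := SgS l i0; have := Sg_mono l iq; have := cj_lt p; lia.
Qed.

Lemma rk_inj l : 3 <= size l -> (forall i, i < size l -> 0 < nth 0 l i) ->
  injective (@rk l).
Proof.
move=> m3 pos.
have ne : forall p, rkn l (@ci l p) (cj p) != Ag l.
  move=> p; apply/eqP.
  by case: (rkP p m3 pos) => [[_ [-> _]]|[_ _ ? ->]|[_ _ _ H]]; lia.
move=> [p|] [q|] //.
- move=> /= E; congr Some.
have iL := ci_lt p; have iL' := ci_lt q; have jL := cj_lt p; have jL' := cj_lt q.
case: (rkP p m3 pos) => [[a1 [b1 c1]]|[a1 b1 c1 d1]|[a1 b1 c1 d1]];
case: (rkP q m3 pos) => [[a2 [b2 c2]]|[a2 b2 c2 d2]|[a2 b2 c2 d2]];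
  rewrite ?d1 ?d2 ?c1 ?c2 ?b1 ?b2 in E; try lia.
- apply: coord_inj; lia.
- apply: coord_inj; lia.
case: (ltngtP (ci p) (ci q)) => H.
- have := @tail_order l p q a1 H; lia.
- have := @tail_order l q p a2 H; lia.
have e1 : nth 0 l (ci p) = nth 0 l (ci q) by rewrite H.
have e2 : Sg l (ci p) = Sg l (ci q) by rewrite H.
apply: coord_inj => //; lia.

  - by move=> /= E; have := ne p; rewrite -E /= eqxx.
  - by move=> /= E; have := ne q; rewrite -E /= eqxx.
Qed.

Lemma rk_le l v : 3 <= size l -> (forall i, i < size l -> 0 < nth 0 l i) ->
  @rk l v <= Ng l.
Proof.
move=> m3 pos; rewrite /Ng; case: v => [p|] /=; last by lia.
by case: (rkP p m3 pos) => [[_ [-> ?]]|[? ? ? ->]|[_ _ _ H]]; lia.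
Qed.


Arguments rkn : simpl never.
Arguments ci : simpl never.
Arguments cj : simpl never.

Lemma card_range (V : finType) (f : V -> nat) (P : {pred V}) lo hi :
  {in P &, injective f} -> (forall x, x \in P -> lo <= f x < hi) -> #|P| <= hi - lo.
Proof.
move=> inj rng; rewrite cardE -(size_map f) -(size_iota lo (hi - lo)).
apply: uniq_leq_size.
  by rewrite map_inj_in_uniq ?enum_uniq // => x y; rewrite !mem_enum; exact: inj.
move=> y /mapP [x]; rewrite mem_enum => Px ->; rewrite mem_iota.
by have := rng x Px; lia.
Qed.

Lemma card_U (V : finType) (A B : {pred V}) : #|[predU A & B]| <= #|A| + #|B|.
Proof. by rewrite -cardUI leq_addr. Qed.

Lemma same_block a b k : 0 < k -> a %/ k = b %/ k -> b <= a -> a - b < k /\ (b < k -> a < k).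
Proof.
move=> k0 E ba; have h1 := leq_trunc_div b k; have h2 := ltn_ceil a k0.
rewrite E mulSn in h2; split; first by move: h1 h2; set X := _ * _; lia.
by move=> bk; move: h2; rewrite divn_small // mul0n addn0.
Qed.

Lemma Fbound l (v : spider_vertex l) :
  3 <= size l -> (forall i, i < size l -> 0 < nth 0 l i) ->
  nth 0 l 0 <= 2 -> nth 0 l 1 <= 2 ->
  #|[pred w | (rk w < rk v) &&
     [|| square_adj (@spider_adj l) v w, square_adj (@spider_adj l) w v | bk w == bk v]]|
  < (size l).+1.
Proof.
move=> m3 pos l0 l1.
set P := [pred w | _].
have H : forall w : spider_vertex l, w \in P -> rk w < rk v /\ (sqadj v w \/ bk w = bk v).
  move=> w; rewrite inE => /andP [rw /or3P [/sq_sqadj h| /sq_sqadj h | /eqP h]].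
  - by split => //; left.
  - by split => //; left; rewrite sqadj_sym.
  - by split => //; right.
have SB : forall w : spider_vertex l, rk w < rk v -> bk w = bk v ->
    rk v <= rk w + size l /\ (Ng l - size l <= rk v -> Ng l - size l <= rk w).
  move=> w rw; rewrite /bk => E.
  have := rk_le w m3 pos; have := rk_le v m3 pos => hv hw.
  have [] := same_block (ltn0Sn (size l)) E; first by lia.
  move=> h1 h2; split; first by lia.
  move=> hv'; have : Ng l - rk w < (size l).+1 by apply: h2; lia.
  lia.
have A1 : 0 < Ag l by rewrite /Ag; have := pos (size l).-1; lia.
have N1 : Ng l - size l = Ag l + nth 0 l 0 - 2 by rewrite /Ng; lia.
have L0 := pos 0.
have T0 : forall q : {i : 'I_(size l) & 'I_(nth 0 l i)}, 0 < ci q -> cj q = 0 ->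
    (0 < cj q \/ ci q = (size l).-1) ->
    rkn l (ci q) (cj q) = Sg l (ci q) + (nth 0 l (ci q) - 1 - cj q) ->
    ci q = (size l).-1 /\ rkn l (ci q) (cj q) = Ag l - 1.
  move=> q a b [|c] d; first by lia.
  split => //; rewrite d /Ag c; have := pos (size l).-1; lia.
set rv := rk v in H SB *.
have Erv : rk v = rv by [].
clearbody rv.
case: v P H SB Erv => [p|] P H SB Erv; last first.
  rewrite /= in Erv; subst rv.
  pose T1 := [pred w : spider_vertex l | (Ag l - 1 <= rk w) && (rk w < Ag l)].
  pose T2 := [pred w : spider_vertex l |
               if w is Some q then (ci q != 0) && (cj q == 1) else false].
  have sub : P \subset [predU T1 & T2].
    apply/subsetP => w /H /= [rw [hw|hw]]; rewrite !inE.
    - case: w rw hw => [q|] //= rw hw.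
      case: (rkP q m3 pos) => [[a [b c]]|[a b c d]|[a b c d]]; try lia.
      case: (posnP (cj q)) => [j0|j0].
        by have [_ e] := T0 q a j0 b c; rewrite e; lia.
      by apply/orP; right; lia.
    - have [_ h] := SB w rw hw; have := h ltac:(rewrite /=; lia); lia.
  apply: leq_ltn_trans (subset_leq_card sub) _.
  apply: leq_ltn_trans (card_U _ _) _.
  have c1 : #|T1| <= Ag l - (Ag l - 1).
    apply: card_range => [x y _ _|x]; first exact: rk_inj.
    by rewrite inE => /andP [a b]; lia.
  have c2 : #|T2| <= size l - 1.
    apply: (@card_range _ (fun w : spider_vertex l => if w is Some q then ci q else 0)).
      move=> [x|] [y|] //; rewrite !inE /= => /andP [x0 /eqP x1] /andP [y0 /eqP y1] E.
      by congr Some; apply: coord_inj; lia.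
    move=> [x|] //; rewrite inE /= => /andP [x0 _]; have := ci_lt x; lia.
  apply: leq_ltn_trans (leq_add c1 c2) _; lia.
have iL := ci_lt p; have jL := cj_lt p.
have win : P \subset [pred w : spider_vertex l | (rv - size l <= rk w) && (rk w < rv)] ->
     #|P| < (size l).+1.
  move=> sub; apply: leq_ltn_trans (subset_leq_card sub) _.
  have : #|[pred w : spider_vertex l | (rv - size l <= rk w) && (rk w < rv)]|
         <= rv - (rv - size l).
    apply: card_range => [x y _ _|x]; first exact: rk_inj.
    by rewrite inE => /andP [a b]; lia.
  move=> h; apply: leq_ltn_trans h _; lia.
case: (rkP p m3 pos) => [[a [b c]]|[a b c d]|[a b c d]].
-
  move: Erv; rewrite /= b => Erv.
  apply: win; apply/subsetP => w /H /= [rw [hw|hw]]; rewrite !inE rw andbT; last first.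
    by have [h _] := SB w rw hw; lia.
  move: rw; case: w hw => [q|] /= hw rw; last by lia.
  have iL' := ci_lt q; have jL' := cj_lt q.
  case: (rkP q m3 pos) => [[a' [b' c']]|[a' b' c' d']|[a' b' c' d']]; rewrite ?d' ?c' ?b'; try lia.
  have j0 : cj q = 0 by lia.
  have [_ e] := T0 q a' j0 b' c'; lia.
-
  move: Erv; rewrite /= d => Erv.
  pose T1 := [pred w : spider_vertex l | (Ag l - 1 <= rk w) && (rk w < rv)].
  pose T2 := [pred w : spider_vertex l |
               if w is Some q then (ci q == ci p) && (1 <= cj q <= 2) else false].
  have sub : P \subset [predU T1 & T2].
    apply/subsetP => w /H /= [rw [hw|hw]]; rewrite !inE rw andbT.
    - move: rw; case: w hw => [q|] /= hw rw; last by lia.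
      have iL' := ci_lt q; have jL' := cj_lt q.
      case: (rkP q m3 pos) => [[a' [b' c']]|[a' b' c' d']|[a' b' c' d']];
        rewrite ?d' ?b'; try lia.
      case: (posnP (cj q)) => [j0|j0]; last by lia.
      by have [_ e] := T0 q a' j0 b' c'; rewrite e; lia.
    - have [_ h] := SB w rw hw; have := h ltac:(lia); lia.
  apply: leq_ltn_trans (subset_leq_card sub) _.
  apply: leq_ltn_trans (card_U _ _) _.
  have c1 : #|T1| <= rv - (Ag l - 1).
    apply: card_range => [x y _ _|x]; first exact: rk_inj.
    by rewrite inE => /andP [a1 b1]; lia.
  have c2 : #|T2| <= minn 3 (nth 0 l (ci p)) - 1.
    apply: (@card_range _ (fun w : spider_vertex l => if w is Some q then cj q else 0)).
      move=> [x|] [y|] //; rewrite !inE /= => /andP [/eqP x0 x1] /andP [/eqP y0 y1] E.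
      by congr Some; apply: coord_inj; lia.
    move=> [x|] //; rewrite inE /= => /andP [/eqP x0 x1].
    have := cj_lt x; rewrite x0; lia.
  have h1 : nth 0 l (ci p) <= 2 \/ 2 <= ci p.
    by case: (ci p) a => [|[|i]] //= _; [left|right].
  apply: leq_ltn_trans (leq_add c1 c2) _; lia.
-
  move: Erv; rewrite /= c => Erv.
  apply: win; apply/subsetP => w /H /= [rw [hw|hw]]; rewrite !inE rw andbT; last first.
    by have [h _] := SB w rw hw; lia.
  move: rw; case: w hw => [q|] /= hw rw; last by lia.
  have iL' := ci_lt q; have jL' := cj_lt q.
  case/orP: hw => [/andP [/andP [/andP [/eqP e1 e2] e3] e4] | /andP [/andP [e1 /eqP e2] /eqP e3]].
    have e5 : nth 0 l (ci p) = nth 0 l (ci q) by rewrite e1.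
    have e6 : Sg l (ci p) = Sg l (ci q) by rewrite e1.
    case: (rkP q m3 pos) => [[a' [b' c']]|[a' b' c' d']|[a' b' c' d']];
      rewrite ?d' ?c' ?b'; lia.
  have [e7 e8] := T0 p a e2 b c.
  case: (rkP q m3 pos) => [[a' [b' c']]|[a' b' c' d']|[a' b' c' d']];
    rewrite ?d' ?c' ?b'; try lia.
Qed.


Unset Implicit Arguments.

Theorem lemma2p6 (l : seq nat) :
  3 <= size l ->
  all (fun x => 0 < x) l ->
  sorted leq l ->
  nth 0 l 1 <= 2 ->
  equitably_choosable (square_adj (@spider_adj l)) (size l).+1.
Proof.
move=> m3 /(all_nthP 0) pos srt l1.
have l0 : nth 0 l 0 <= 2.
  apply: leq_trans l1; move: m3 srt; clear; case: l => [|a [|b s]] //= _ /andP [] //.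
apply: (@greedy _ _ _ (@rk l) (@bk l) None).
- exact: rk_inj.
- by move=> x; rewrite /square_adj eqxx.
- move=> v; rewrite /ceil_div card_sp // /bk.
  have -> : (Ng l).+1 + (size l).+1.-1 = Ng l + 1 * (size l).+1 by rewrite /=; lia.
  rewrite divnDMl // addn1 ltnS; apply: leq_div2r; exact: leq_subr.
- by move=> v; apply: Fbound.
Qed.
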